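(* Let $G$ be a finite graph with $d \geq 2$ vertices satisfying: (1) $G$ is connected; (2) $G$ is simple; (3) $G$ is strictly subtrivalent; (4) the shortest path between any two distinct vertices of degree $3$ contains at least $3$ edges; (5) $G$ contains no triangle. Let $g = m - d + 1$, where $m$ is the number of edges of $G$. Then $d \geq 2g+2$.
   Context: A graph is strictly subtrivalent if every vertex has degree at most $3$ and at least one vertex has degree less than $3$. The quantity $g = m-d+1 = h^1(G,k)$ (the first Betti number of $G$ viewed as a $1$-dimensional simplicial complex) is called the genus of $G$; it is not the graph-theoretic genus. *)

(* Defs.v *)
From mathcomp Require Import all_boot all_order all_algebra.
Set Implicit Arguments. Unset Strict Implicit. Unset Printing Implicit Defensive.

Definition simple_graph (T : finType) (e : rel T) : Prop :=
  symmetric e /\ irreflexive e.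

Definition deg (T : finType) (e : rel T) (x : T) : nat := #|[set y | e x y]|.

Definition nedges (T : finType) (e : rel T) : nat :=
  #|[set E : {set T} | [exists x, exists y, e x y && (E == [set x; y])]]|.

Definition connected_graph (T : finType) (e : rel T) : Prop :=
  forall x y : T, connect e x y.

Definition strictly_subtrivalent (T : finType) (e : rel T) : Prop :=
  (forall x, deg e x <= 3) /\ (exists x, deg e x < 3).

(* every path between two distinct degree-3 vertices has at least 3 edges;
   a path from u to v is u :: p with path e u p and last u p = v, having size p edges *)
Definition deg3_far (T : finType) (e : rel T) : Prop :=
  forall (u v : T) (p : seq T), u != v -> deg e u = 3 -> deg e v = 3 ->
    path e u p -> last u p = v -> 3 <= size p.

Definition triangle_free (T : finType) (e : rel T) : Prop :=
  forall x y z : T, ~ [&& e x y, e y z & e z x].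

(* Main.v *)
Require Import Defs.
From mathcomp Require Import all_boot all_order all_algebra.
From mathcomp Require Import zify.
Import GRing.Theory Num.Theory.

Section S.
Variables (T : finType) (e : rel T).
Hypothesis sym : symmetric e.
Hypothesis irr : irreflexive e.

Definition Ed := [set E : {set T} | [exists x, exists y, e x y && (E == [set x; y])]].

Lemma deg_edges x : deg e x = #|[set E in Ed | x \in E]|.
Proof.
have -> : [set E in Ed | x \in E] = [set [set x; y] | y in [set y | e x y]].
  apply/setP => E; rewrite !inE; apply/andP/imsetP.
  - case=> /existsP[a /existsP[b /andP[eab /eqP->]]]; rewrite in_set2.
    case/orP=> /eqP xe.
      by exists b; [rewrite inE xe | rewrite xe].
    by exists a; [rewrite inE xe sym | rewrite xe setUC].
  - case=> y; rewrite inE => exy ->; split; last exact: set21.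
    by apply/existsP; exists x; apply/existsP; exists y; rewrite exy eqxx.
rewrite card_in_imset // => y1 y2; rewrite !inE => e1 e2 E12.
have : y1 \in [set x; y2] by rewrite -E12 set22.
rewrite in_set2; case/orP => /eqP // y1x.
by move: e1; rewrite y1x irr.
Qed.

Lemma handshake : (\sum_x deg e x = 2 * nedges e)%N.
Proof.
rewrite /nedges -/Ed.
under eq_bigr => x _ do rewrite deg_edges -sum1_card big_mkcond /=.
rewrite exchange_big /=.
transitivity (\sum_(E in Ed) 2)%N; last by rewrite sum_nat_const mulnC.
rewrite [RHS]big_mkcond /=; apply: eq_bigr => E _.
case: ifP => EEd; last first.
  by apply: big1 => y _; rewrite inE EEd.
move: EEd; rewrite inE => /existsP[a /existsP[b /andP[eab /eqP EE]]].
have ab : a != b by apply: contraTneq eab => ->; rewrite irr.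
transitivity #|E|; last by rewrite EE cards2 ab.
rewrite -sum1_card [RHS]big_mkcond /=.
have EEd : E \in Ed by rewrite inE; apply/existsP; exists a; apply/existsP; exists b; rewrite eab EE eqxx.
apply: eq_bigr => y _; rewrite inE EEd.
by case: (y \in E).
Qed.

Lemma deg_le x : deg e x <= #|T|.-1.
Proof.
rewrite /deg -(cardsC1 x); apply: subset_leq_card; apply/subsetP => y.
by rewrite !inE; apply: contraTneq => ->; rewrite irr.
Qed.

Hypothesis far : deg3_far e.
Hypothesis deg3 : forall x, deg e x <= 3.

Lemma nbr_not3 u w : deg e u = 3 -> e u w -> deg e w != 3.
Proof.
move=> du euw; apply/eqP => dw.
have uw : u != w by apply: contraTneq euw => ->; rewrite irr.
have p1 : path e u [:: w] by rewrite /= euw.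
by have := @far u w [:: w] uw du dw p1 erefl.
Qed.
Lemma nbr_disj u v w : u != v -> deg e u = 3 -> deg e v = 3 -> e u w -> e v w -> False.
Proof.
move=> uv du dv euw evw.
have p1 : path e u [:: w; v] by rewrite /= euw sym evw.
by have := @far u v [:: w; v] uv du dv p1 erefl.
Qed.

Definition S := (\sum_x (3 - deg e x))%N.

Lemma sumS : (\sum_x deg e x + S = 3 * #|T|)%N.
Proof.
rewrite /S -big_split /= (eq_bigr (fun _ => 3)).
  by rewrite sum_nat_const mulnC.
by move=> x _; rewrite subnKC.
Qed.

Lemma S_geL : #|[set x | deg e x != 3]| <= S.
Proof.
rewrite -sum1_card big_mkcond /S; apply: leq_sum => x _; rewrite inE.
by have := deg3 x; case: ifP => // /eqP; lia.
Qed.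

Lemma main_nat (h2 : 1 < #|T|) (tf : triangle_free e) :
  (\sum_x deg e x + 4 <= 3 * #|T|)%N.
Proof.
have sS := sumS; have hs := handshake.
set L := [set x | deg e x != 3].
have hL := S_geL; rewrite -/L in hL.
case: (leqP 4 #|L|) => [h4|hL3]; first lia.
case: (pickP [pred x | deg e x == 3]) => [u /eqP du | none].
  have NL : [set w | e u w] \subset L.
    by apply/subsetP => w; rewrite !inE; apply: nbr_not3.
  have Nu : #|[set w | e u w]| = 3 by [].
  have cL : #|L| = 3 by have := subset_leq_card NL; rewrite Nu; lia.
  have LN : L = [set w | e u w].
    by apply/eqP; rewrite eq_sym eqEcard NL cL Nu.
  have sub1 : ~: L \subset [set u].
    apply/subsetP => v; rewrite !inE negbK => /eqP dv.
    case: (eqVneq v u) => // vu.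
    have : [set w | e v w] != set0 by rewrite -cards_eq0 -[#|_|]/(deg e v) dv.
    case/set0Pn => w; rewrite inE => evw.
    have : w \in L by rewrite inE; apply: nbr_not3 evw.
    rewrite LN inE => euw.
    by rewrite eq_sym in vu; case: (nbr_disj _ _ _ vu du dv euw evw).
  have c1 := subset_leq_card sub1; rewrite cards1 in c1.
  have c2 : 0 < #|~: L| by apply/card_gt0P; exists u; rewrite !inE du.
  have := cardsC L; lia.
have nd3 x : deg e x != 3 by have := none x; rewrite /= => ->.
have LT : L = setT by apply/setP => x; rewrite !inE nd3.
rewrite LT cardsT in hL3 hL.
have dle := deg_le.
have [T2|T3] : #|T| = 2 \/ #|T| = 3 by lia.
  have : (\sum_(x : T) 2 <= S)%N.
    by apply: leq_sum => x _; have := dle x; rewrite T2 /=; lia.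
  rewrite sum_nat_const; change #|xpredT| with #|T|; lia.
case: (pickP [pred x | deg e x <= 1]) => [x0 hx0 | all2].
  have : (\sum_(y : T) (1 + (y == x0)) <= S)%N.
    apply: leq_sum => y _; have := nd3 y; have := deg3 y.
    case: (eqVneq y x0) => [->|_] /=; last by lia.
    by move: hx0 => /=; lia.
  rewrite big_split /= sum_nat_const (bigD1 x0) //= eqxx big1 /=; first by change #|xpredT| with #|T|; rewrite T3 in sS *; lia.
  by move=> y /negbTE ->.
have d2 x : deg e x = 2.
  by have := nd3 x; have := deg3 x; have := all2 x; rewrite /=; lia.
have NC x : [set y | e x y] = [set~ x].
  apply/eqP; rewrite eqEcard cardsC1 -[#|[set y | e x y]|]/(deg e x) d2 T3 andbT.
  by apply/subsetP => y; rewrite !inE; apply: contraTneq => ->; rewrite irr.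
have [x0 _] : exists x0 : T, true.
  by have /card_gt0P[x0 _] : 0 < #|T| by lia; exists x0.
have : #|[set~ x0]| == 2 by rewrite cardsC1 T3.
case/cards2P => y [z [yz E]].
have : y \in [set y; z] := set21 y z.
rewrite -E -NC inE => exy.
have : z \in [set y; z] := set22 y z.
rewrite -E -NC inE => exz.
have : z \in [set~ y] by rewrite !inE eq_sym.
rewrite -NC inE => eyz.
exfalso; apply: (tf x0 y z); rewrite exy eyz /= sym //.
Qed.
End S.

Local Open Scope ring_scope.

Theorem lemma1p2 (T : finType) (e : rel T) :
  (2 <= #|T|)%N ->
  connected_graph e ->
  simple_graph e ->
  strictly_subtrivalent e ->
  deg3_far e ->
  triangle_free e ->
  let d : int := (#|T|)%:Z in
  let g : int := (nedges e)%:Z - d + 1 in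
  2 * g + 2 <= d.
Proof.
move=> h2 _ [sym irr] [d3 _] far tf; cbv zeta.
have := @main_nat _ _ sym irr far d3 h2 tf.
rewrite (@handshake _ _ sym irr) => H.
lia.
Qed.
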